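(* Let $S=s_1,\ldots,s_n$ be a sequence of positive real numbers with mean $\mu=\frac1n\sum_is_i$, let $\alpha>1$, $\gamma>0$, and let $k$ be a positive integer. If $(L,\beta)$ is an optimal solution of $\textsc{Exp}(\alpha)$ for $S,\alpha,\gamma,k$, then \[ \frac{1}{\alpha^k\mu}\le\beta\le\frac1\mu. \]
   Context: A level sequence is $L=\ell_1,\ldots,\ell_n$ of integers with $0\le\ell_i\le k$; set $\ell_0=0$. The penalty is $\mathrm{pen}(x,y)=\max(y-x,0)\,\gamma\log n$; $p_{\exp}(s;\lambda)=\lambda e^{-\lambda s}$; $\mathrm{score}_{\exp}(L,S;\alpha,\beta,\gamma)=\sum_{i=1}^n\big[-\log p_{\exp}(s_i;\beta\alpha^{\ell_i})+\mathrm{pen}(\ell_{i-1},\ell_i)\big]$. Problem $\textsc{Exp}(\alpha)$: given $S,\alpha,\gamma,k$, find $L$ and $\beta>0$ minimizing this score. *)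

(* Defs.v *)
From Stdlib Require Import Reals List.
Import ListNotations.
Open Scope R_scope.

Definition sum1n (n : nat) (f : nat -> R) : R :=
  fold_right Rplus 0 (map f (seq 1 n)).

(* Level sequence L : nat -> nat, used at indices 1..n; ell_0 = 0. *)
Definition lev (L : nat -> nat) (i : nat) : nat :=
  match i with O => O | _ => L i end.

Definition valid_levels (n k : nat) (L : nat -> nat) : Prop :=
  forall i, (1 <= i <= n)%nat -> (L i <= k)%nat.

Definition pen (n : nat) (gamma : R) (x y : nat) : R :=
  Rmax (INR y - INR x) 0 * gamma * ln (INR n).

Definition p_exp (s lam : R) : R := lam * exp (- lam * s).

Definition score_exp (n : nat) (S : nat -> R) (L : nat -> nat)
    (alpha beta gamma : R) : R :=
  sum1n n (fun i =>
    - ln (p_exp (S i) (beta * alpha ^ (lev L i)))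
    + pen n gamma (lev L (i - 1)) (lev L i)).

Definition optimal_exp (n : nat) (S : nat -> R) (alpha gamma : R) (k : nat)
    (L : nat -> nat) (beta : R) : Prop :=
  valid_levels n k L /\ 0 < beta /\
  forall (L' : nat -> nat) (beta' : R),
    valid_levels n k L' -> 0 < beta' ->
    score_exp n S L alpha beta gamma <= score_exp n S L' alpha beta' gamma.

(* Main.v *)
Require Import Defs.
From Stdlib Require Import Reals List Lra Lia.
Import ListNotations.
Open Scope R_scope.

Definition sumL (l : list nat) (f : nat -> R) : R := fold_right Rplus 0 (map f l).

Lemma sumL_ext l f g : (forall x, In x l -> f x = g x) -> sumL l f = sumL l g.
Proof.
  induction l as [|a l IH]; intros H; simpl; auto.
  unfold sumL in *; simpl. rewrite H by (left; auto). rewrite IH; auto.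
  intros; apply H; right; auto.
Qed.

Lemma sumL_plus l f g : sumL l (fun i => f i + g i) = sumL l f + sumL l g.
Proof. induction l; unfold sumL in *; simpl; [lra|rewrite IHl; lra]. Qed.

Lemma sumL_scal l c f : sumL l (fun i => c * f i) = c * sumL l f.
Proof. induction l; unfold sumL in *; simpl; [lra|rewrite IHl; lra]. Qed.

Lemma sumL_const l c : sumL l (fun _ => c) = INR (length l) * c.
Proof.
  induction l; unfold sumL in *; cbn [length map fold_right]; [simpl; lra|]. rewrite IHl.
  rewrite S_INR; lra.
Qed.

Lemma sumL_le l f g : (forall x, In x l -> f x <= g x) -> sumL l f <= sumL l g.
Proof.
  induction l as [|a l IH]; intros H; unfold sumL in *; simpl; [lra|].
  assert (f a <= g a) by (apply H; left; auto).
  assert (fold_right Rplus 0 (map f l) <= fold_right Rplus 0 (map g l))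
    by (apply IH; intros; apply H; right; auto). lra.
Qed.

Lemma sumL_pos l f : l <> nil -> (forall x, In x l -> 0 < f x) -> 0 < sumL l f.
Proof.
  induction l as [|a l IH]; intros Hn H; [congruence|]. unfold sumL in *; simpl.
  assert (0 < f a) by (apply H; left; auto).
  destruct l as [|b l'].
  - simpl; lra.
  - assert (0 < fold_right Rplus 0 (map f (b :: l'))).
    { apply IH; [discriminate|intros; apply H; right; auto]. }
    lra.
Qed.

Lemma In_seq1 n i : In i (seq 1 n) -> (1 <= i <= n)%nat.
Proof. intros H; apply in_seq in H; lia. Qed.

Theorem lemma8 (n : nat) (S : nat -> R) (alpha gamma : R) (k : nat)
    (L : nat -> nat) (beta : R) :
  (1 <= n)%nat ->
  (forall i, (1 <= i <= n)%nat -> 0 < S i) ->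
  1 < alpha -> 0 < gamma -> (1 <= k)%nat ->
  optimal_exp n S alpha gamma k L beta ->
  let mu := sum1n n S / INR n in
  1 / (alpha ^ k * mu) <= beta <= 1 / mu.
Proof.
  intros Hn HS Ha Hg Hk [Hv [Hb Hopt]] mu.
  set (a := fun i => alpha ^ lev L i).
  assert (Hapos : forall i, 0 < a i) by (intros; unfold a; apply pow_lt; lra).
  set (A := sumL (seq 1 n) (fun i => a i * S i)).
  set (T := sumL (seq 1 n) S).
  set (C := sumL (seq 1 n) (fun i => - ln (a i) + pen n gamma (lev L (i-1)) (lev L i))).
  assert (Hform : forall b, 0 < b -> score_exp n S L alpha b gamma
      = C + INR n * (- ln b) + b * A).
  { intros b Hb'. unfold score_exp, sum1n.
    change (fold_right Rplus 0 (map ?f (seq 1 n))) with (sumL (seq 1 n) f).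
    rewrite (sumL_ext _ _ (fun i => (- ln (a i) + pen n gamma (lev L (i-1)) (lev L i))
        + (- ln b) + b * (a i * S i))).
    - rewrite sumL_plus, sumL_plus, sumL_const, sumL_scal, length_seq. unfold C, A. lra.
    - intros i _. unfold p_exp. fold (a i).
      assert (0 < b * a i) by (apply Rmult_lt_0_compat; auto).
      rewrite ln_mult; [|auto|apply exp_pos]. rewrite ln_exp, ln_mult by auto. ring. }
  assert (Hn0 : 0 < INR n) by (apply lt_0_INR; lia).
  assert (Hne : seq 1 n <> nil) by (destruct n; [lia|discriminate]).
  assert (HT : 0 < T) by (apply sumL_pos; auto; intros; apply HS, In_seq1; auto).
  assert (HA1 : T <= A).
  { apply sumL_le. intros i Hi. apply In_seq1 in Hi.
    assert (1 <= a i).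
    { unfold a, lev. destruct i; [lia|]. apply pow_R1_Rle; lra. }
    specialize (HS i Hi). nra. }
  assert (HA2 : A <= alpha ^ k * T).
  { unfold T. rewrite <- sumL_scal. apply sumL_le. intros i Hi. apply In_seq1 in Hi.
    assert (a i <= alpha ^ k).
    { unfold a, lev. destruct i; [lia|]. apply Rle_pow; [lra|]. apply Hv; auto. }
    specialize (HS i Hi). nra. }
  assert (HA : 0 < A) by lra.
  assert (Hb0 : beta = INR n / A).
  { assert (Hb1 : 0 < INR n / A) by (apply Rdiv_lt_0_compat; auto).
    specialize (Hopt L (INR n / A) Hv Hb1).
    rewrite !Hform in Hopt by auto.
    set (x := beta * A / INR n).
    assert (Hx : 0 < x) by (unfold x; apply Rdiv_lt_0_compat; auto; nra).
    assert (Hlb : ln beta = ln x + ln (INR n / A)).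
    { rewrite <- ln_mult by auto. f_equal. unfold x. field. lra. }
    rewrite Hlb in Hopt.
    assert (Hbx : beta * A = x * INR n) by (unfold x; field; lra).
    assert (HnA : INR n / A * A = INR n) by (field; lra).
    assert (Hineq : x - 1 <= ln x) by nra.
    destruct (Req_dec x 1) as [E|E].
    - unfold x in E. apply (Rmult_eq_reg_r A); [|lra].
      rewrite HnA. apply (Rmult_eq_reg_r (/ INR n)); [|apply Rinv_neq_0_compat; lra].
      rewrite Rinv_r by lra. rewrite <- E. unfold Rdiv. ring.
    - exfalso. assert (ln x <> 0).
      { intro E2. apply E. rewrite <- (exp_ln x Hx), E2, exp_0. auto. }
      pose proof (exp_ineq1 (ln x) H). rewrite exp_ln in H0 by auto. lra. }
  unfold mu, sum1n.
  change (fold_right Rplus 0 (map S (seq 1 n))) with T. rewrite Hb0.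
  assert (Hk' : 0 < alpha ^ k) by (apply pow_lt; lra).
  replace (1 / (alpha ^ k * (T / INR n))) with (INR n / (alpha ^ k * T)) by (field; lra).
  replace (1 / (T / INR n)) with (INR n / T) by (field; lra).
  split; unfold Rdiv; apply Rmult_le_compat_l; try lra;
    apply Rinv_le_contravar; nra.
Qed.
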